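(* Let $p$ be an odd prime and let $G=C_p\rtimes C_{p-1}\cong(\mathbb{F}_p,+)\rtimes(\mathbb{F}_p^\times,\times)$ act on $\mathbb{F}_p[t]/(t-1)^p=\mathbb{F}_p[t]/(t^p-1)$ by $(c,m)\cdot t^x=t^{c+mx}$. Then the $\mathbb{F}_p[G]$-submodule generated by $$\bar y=\sum_{i\in\mathbb{F}_p^\times}i^{-1}t^i$$ equals $(t-1)\mathbb{F}_p[t]/(t-1)^p$, the kernel of the augmentation $\mathbb{F}_p[t]/(t-1)^p\to\mathbb{F}_p$, $t\mapsto1$. *)

(* Defs.v *)
From HB Require Import structures.
From mathcomp Require Import all_boot all_order all_algebra.
Set Implicit Arguments. Unset Strict Implicit. Unset Printing Implicit Defensive.
Import GRing.Theory.
Local Open Scope ring_scope.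

(* The ring F_p[t]/(t^p - 1) is represented by polynomials in {poly 'F_p},
   two polynomials denoting the same element iff t^p - 1 divides their
   difference.  For x : 'F_p (an ordinal < p when p is prime), t^x is
   represented by 'X^(val x), which is well defined since t^p = 1. *)

Definition tmod (p : nat) : {poly 'F_p} := 'X^p - 1.

Definition eqmod (p : nat) (q r : {poly 'F_p}) : Prop := tmod p %| (q - r).

Definition tpow (p : nat) (x : 'F_p) : {poly 'F_p} := 'X^(val x).

Definition act (p : nat) (c m : 'F_p) (q : {poly 'F_p}) : {poly 'F_p} :=
  \sum_(i < size q) q`_i *: tpow (c + m * (i%:R)).

Definition ybar (p : nat) : {poly 'F_p} :=
  \sum_(i : 'F_p | i != 0) i^-1 *: tpow i.

(* membership (mod t^p - 1) in the F_p[G]-submodule generated by ybar, i.e.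
   the F_p-span of the G-orbit {(c,m) . ybar : c in F_p, m in F_p^*} *)
Definition in_gen_submodule (p : nat) (q : {poly 'F_p}) : Prop :=
  exists a : 'F_p -> 'F_p -> 'F_p,
    eqmod q (\sum_(c : 'F_p) \sum_(m : 'F_p | m != 0) a c m *: act c m (ybar p)).

Definition in_tminus1_ideal (p : nat) (q : {poly 'F_p}) : Prop :=
  exists r : {poly 'F_p}, eqmod q (('X - 1) * r).

(* Main.v *)
Require Import Defs.
From HB Require Import structures.
From mathcomp Require Import all_boot all_order all_algebra.
From mathcomp Require Import ring.
Set Implicit Arguments. Unset Strict Implicit. Unset Printing Implicit Defensive.
Import GRing.Theory.
Local Open Scope ring_scope.

Section S.
Variable p : nat.
Hypothesis p_prime : prime p.
Hypothesis p_odd : odd p.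

Lemma eqmod_refl (a : {poly 'F_p}) : eqmod a a.
Proof. rewrite /eqmod subrr; exact: (@dvdp0 _ (tmod p)). Qed.

Lemma eqmod_sym (a b : {poly 'F_p}) : eqmod a b -> eqmod b a.
Proof. by rewrite /eqmod -opprB dvdpNr. Qed.

Lemma eqmod_trans (a b c : {poly 'F_p}) : eqmod a b -> eqmod b c -> eqmod a c.
Proof.
rewrite /eqmod => h1 h2; have := dvdp_add h1 h2.
by rewrite addrA subrK.
Qed.

Lemma dvdp_sumX (I : Type) (r : seq I) (P : pred I) (F : I -> {poly 'F_p}) (d : {poly 'F_p}) :
  (forall i, P i -> d %| F i) -> d %| \sum_(i <- r | P i) F i.
Proof.
move=> h; elim: r => [|x r IH]; first by rewrite big_nil; exact: dvdp0.
rewrite big_cons; case: ifP => // Px; exact: dvdp_add (h _ Px) IH.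
Qed.

Lemma eqmod_sum (I : Type) (r : seq I) (P : pred I) (F G : I -> {poly 'F_p}) :
  (forall i, P i -> eqmod (F i) (G i)) ->
  eqmod (\sum_(i <- r | P i) F i) (\sum_(i <- r | P i) G i).
Proof.
move=> h; rewrite /eqmod -sumrB; exact: dvdp_sumX.
Qed.

Lemma eqmod_mull (a b c : {poly 'F_p}) : eqmod a b -> eqmod (c * a) (c * b).
Proof. by rewrite /eqmod -mulrBr => h; apply: dvdp_mull. Qed.

Lemma eqmod_scale (a b : {poly 'F_p}) k : eqmod a b -> eqmod (k *: a) (k *: b).
Proof. by rewrite -!mul_polyC; apply: eqmod_mull. Qed.

Lemma Xn_mod n : eqmod ('X^n : {poly 'F_p}) 'X^(n %% p).
Proof.
rewrite /eqmod /tmod {1}(divn_eq n p) exprD -{2}(mul1r 'X^(n %% p)) -mulrBl.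
apply: dvdp_mulr.
rewrite mulnC exprM -{2}(expr1n _ (n %/ p)) subrXX.
exact: dvdp_mulr.
Qed.

Lemma val_addFp (c : 'F_p) (i : nat) : val (c + i%:R) = ((val c + i) %% p)%N.
Proof.
rewrite -[c in LHS]natr_Zp -natrD; exact: val_Fp_nat.
Qed.


Lemma act_trans (c : 'F_p) (q : {poly 'F_p}) :
  eqmod (act c 1 q) ('X^(val c) * q).
Proof.
have -> : 'X^(val c) * q = 'X^(val c) * \sum_(i < size q) q`_i *: 'X^i.
  by rewrite -poly_def coefK.
rewrite /act mulr_sumr.
apply: eqmod_sum => i _.
rewrite -scalerAr -exprD; apply: eqmod_scale.
rewrite /tpow mul1r val_addFp; apply: eqmod_sym; exact: Xn_mod.
Qed.

Lemma act_horner1 (c m : 'F_p) (q : {poly 'F_p}) : (act c m q).[1] = q.[1].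
Proof.
rewrite /act horner_sum horner_coef; apply: eq_bigr => i _.
by rewrite hornerZ hornerXn !expr1n.
Qed.


Lemma p_gt2 : (2 < p)%N.
Proof.
have := prime_gt1 p_prime; rewrite leq_eqVlt => /orP [/eqP h|//].
by move: p_odd; rewrite -h.
Qed.

Lemma two_neq0 : (2%:R : 'F_p) != 0.
Proof.
apply/eqP => h; have := val_Fp_nat p_prime 2.
by rewrite h /= modn_small //; exact: p_gt2.
Qed.

Lemma ybar_horner1 : (ybar p).[1] = 0.
Proof.
rewrite /ybar horner_sum.
under eq_bigr => i _ do rewrite hornerZ /tpow hornerXn expr1n mulr1.
set S := \sum_(i | i != 0) i^-1.
have HS : S = - S.
  rewrite {1}/S (reindex_inj oppr_inj) /= /S -sumrN.
  by apply: eq_big => [i|i _]; rewrite ?oppr_eq0 ?invrN.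
have : S * 2%:R = 0 by rewrite mulr_natr mulr2n {1}HS addNr.
by move/eqP; rewrite mulf_eq0 (negbTE two_neq0) orbF => /eqP.
Qed.


Lemma ybar_deriv1 : ((ybar p)^`()).[1] = -1.
Proof.
rewrite /ybar raddf_sum horner_sum.
have H : forall i : 'F_p, i != 0 -> ((i^-1 *: tpow i)^`()).[1] = 1.
  move=> i i0; rewrite /tpow derivZ derivXn hornerZ hornerMn hornerXn expr1n.
  by rewrite natr_Zp mulVf.
rewrite (eq_bigr (fun _ => 1) H).
have := sumr_const 'F_p (1 : 'F_p).
rewrite card_Fp // pchar_Fp_0 // (bigD1 0) //= => /eqP.
by rewrite addrC addr_eq0 => /eqP.
Qed.


Lemma size_tmod : size (tmod p) = p.+1.
Proof. by rewrite /tmod -polyC1 size_XnsubC // prime_gt0. Qed.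

Lemma tmod_neq0 : tmod p != 0.
Proof. by rewrite -size_poly_eq0 size_tmod. Qed.

Lemma expand_Fp (e : {poly 'F_p}) : (size e <= p)%N ->
  e = \sum_(c : 'F_p) e`_(val c) *: 'X^(val c).
Proof.
move=> se; apply/polyP => k; rewrite coef_sum.
under eq_bigr do rewrite coefZ coefXn.
case: (ltnP k p) => hk.
  rewrite (bigD1 (k%:R)) //= val_Fp_nat // modn_small // eqxx mulr1 big1 ?addr0 //.
  move=> c hc; case: eqP => [hk'|]; last by rewrite mulr0.
  by move: hc; rewrite hk' natr_Zp eqxx.
rewrite nth_default ?(leq_trans se) // big1 // => c _.
have hc : (val c < p)%N by have := ltn_ord c; rewrite {2}Fp_cast.
case: eqP => [hk'|]; last by rewrite mulr0.
by move: hc; rewrite -hk' ltnNge hk.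
Qed.

Lemma tmodE : tmod p = ('X - 1%:P) ^+ p.
Proof.
have hc : [char {poly 'F_p}].-nat p by rewrite pnatE // pchar_poly pchar_Fp.
by rewrite /tmod exprDn_pchar // exprNn_pchar // polyC1 expr1n.
Qed.

End S.

Lemma ring_id (R : comPzRingType) (A r u v w T d : R) :
  u * w + v * T = 1 ->
  A * r - (w * A) * (r * u - d * T) = (A * r * v + d * (w * A)) * T.
Proof.
move=> h; rewrite -{1}[A * r]mulr1 -h; ring.
Qed.

Theorem mainTheorem19 (p : nat) (p_prime : prime p) (p_odd : odd p) :
  forall q : {poly 'F_p}, in_gen_submodule q <-> in_tminus1_ideal q.
Proof.
move=> q; split.
  case=> a Hq.
  set S := (X in eqmod q X) in Hq.
  have rS : root S 1.
    rewrite /root /S horner_sum big1 // => c _.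
    rewrite horner_sum big1 // => m _.
    by rewrite hornerZ act_horner1 (ybar_horner1 p_prime p_odd) mulr0.
  case/factor_theorem: rS => r Hr.
  by exists r; rewrite mulrC -polyC1 -Hr.
case=> r Hr.
have ry : root (ybar p) 1 by rewrite /root (ybar_horner1 p_prime p_odd).
case/factor_theorem: ry => w Hw.
have w1 : w.[1] = -1.
  have := ybar_deriv1 p_prime; rewrite Hw derivM derivXsubC hornerD !hornerM.
  by rewrite hornerXsubC subrr mulr0 add0r hornerC mulr1.
have cw : coprimep w (('X - 1%:P) ^+ p).
  apply: coprimep_expr; rewrite coprimep_XsubC /root w1 oppr_eq0 oner_eq0 //.
case/Bezout_eq1_coprimepP: cw => [[u v]] /= Huv.
rewrite -(tmodE p_prime) in Huv.
set T := tmod p in Huv.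
set e := (r * u) %% T.
have He : r * u = (r * u %/ T) * T + e by rewrite /e -divp_eq.
exists (fun c m => if m == 1 then e`_(val c) else 0).
apply: (eqmod_trans Hr).
have E1 : eqmod (('X - 1) * r) (ybar p * e).
  rewrite /eqmod.
  set d := r * u %/ T.
  have He' : e = r * u - d * T by apply/eqP; rewrite eq_sym subr_eq addrC -He.
  have -> : ('X - 1) * r - ybar p * e = (('X - 1) * r * v + d * ybar p) * T.
    rewrite Hw He' polyC1; exact: ring_id.
  exact: dvdp_mull (dvdpp T).
apply: (eqmod_trans E1).
have se : (size e <= p)%N.
  by have := ltn_modpN0 (r * u) (tmod_neq0 p_prime); rewrite size_tmod.
have -> : ybar p * e = \sum_(c : 'F_p) e`_(val c) *: ('X^(val c) * ybar p).
  rewrite {1}(expand_Fp p_prime se) mulr_sumr; apply: eq_bigr => c _.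
  by rewrite -scalerAr mulrC.
apply: eqmod_sum => c _.
rewrite (bigD1 1) ?oner_neq0 //= big1 ?addr0; last first.
  by move=> m /andP [_ /negbTE ->]; rewrite scale0r.
apply: eqmod_scale; apply: eqmod_sym; exact: act_trans.
Qed.
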